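(* In the $\mathbf N$-agent system with class-wise distributions described in the context, let $\{\bar{\boldsymbol\mu}_t^{\mathbf N},\bar{\boldsymbol\nu}_t^{\mathbf N}\}_{t\ge0}$ be the collections of class-wise empirical state and action distributions induced by a policy $\bar{\boldsymbol\pi}=\{\bar{\boldsymbol\pi}_t\}_{t\ge0}$. Then for every $t\ge0$: (a) $\mathbb E|\bar{\boldsymbol\nu}_t^{\mathbf N}-\bar\nu^{\mathrm{MF}}(\bar{\boldsymbol\mu}_t^{\mathbf N},\bar{\boldsymbol\pi}_t)|_1\le\big(\sum_{k\in[K]}\frac1{\sqrt{N_k}}\big)\sqrt{|\mathcal U|}$; (b) $\mathbb E\Big|\frac1{N_{\mathrm{pop}}}\sum_{k\in[K]}\sum_{j=1}^{N_k}\bar r_k(x_{j,k}^t,u_{j,k}^t,\bar{\boldsymbol\mu}_t^{\mathbf N},\bar{\boldsymbol\nu}_t^{\mathbf N})-\sum_{k\in[K]}\theta_k\bar r_k^{\mathrm{MF}}(\bar{\boldsymbol\mu}_t^{\mathbf N},\bar{\boldsymbol\pi}_t)\Big|\le\bar C_R\big(\sum_{k}\frac1{\sqrt{N_k}}\big)\sqrt{|\mathcal U|}$; (c) $\mathbb E|\bar{\boldsymbol\mu}_{t+1}^{\mathbf N}-\bar P^{\mathrm{MF}}(\bar{\boldsymbol\mu}_t^{\mathbf N},\bar{\boldsymbol\pi}_t)|_1\le\bar C_P\big(\sum_k\frac1{\sqrt{N_k}}\big)\sqrt{|\mathcal X||\mathcal U|}$, where $\bar C_R=\bar M_R+\bar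 L_R$ and $\bar C_P=2+K\bar L_P$.
   Context: Fix $K\ge1$, $N_1,\dots,N_K\ge1$, $[K]=\{1,\dots,K\}$, $N_{\mathrm{pop}}=\sum_kN_k$, $\theta_k=N_k/N_{\mathrm{pop}}$, finite sets $\mathcal X,\mathcal U$. $\mathcal P(A)$ is the set of probability distributions on $A$; $\mathcal P^K(A)=\mathcal P(A)^K$ with elements written $\bar{\boldsymbol\mu}(\cdot,k)$ and $|\bar{\boldsymbol\mu}|_1=\sum_k\sum_a|\bar{\boldsymbol\mu}(a,k)|$. Agent $j\in[N_k]$ of class $k$ has state $x_{j,k}^t$ and action $u_{j,k}^t$; $\bar{\boldsymbol\mu}_t^{\mathbf N}(x,k)=\frac1{N_k}\sum_{j=1}^{N_k}\mathbf 1(x_{j,k}^t=x)$, $\bar{\boldsymbol\nu}_t^{\mathbf N}(u,k)=\frac1{N_k}\sum_{j=1}^{N_k}\mathbf 1(u_{j,k}^t=u)$. Constants $\bar M_R,\bar L_R,\bar L_P>0$. For each $k$: $\bar r_k:\mathcal X\times\mathcal U\times\mathcal P^K(\mathcal X)\times\mathcal P^K(\mathcal U)\to\mathbb R$, $\bar P_k:\mathcal X\times\mathcal U\times\mathcal P^K(\mathcal X)\times\mathcal P^K(\mathcal U)\to\mathcal P(\mathcal X)$ with $|\bar r_k|\le\bar M_R$, $|\bar r_k(x,u,\bar{\boldsymbol\mu}_1,\bar{\boldsymbol\nu}_1)-\bar r_k(x,u,\bar{\boldsymbol\mu}_2,\bar{\boldsymbol\nu}_2)|\le\bar L_R(|\bar{\boldsymbol\mu}_1-\bar{\boldsymbol\mu}_2|_1+|\bar{\boldsymbol\nu}_1-\bar{\boldsymbol\nu}_2|_1)$,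 $|\bar P_k(x,u,\bar{\boldsymbol\mu}_1,\bar{\boldsymbol\nu}_1)-\bar P_k(x,u,\bar{\boldsymbol\mu}_2,\bar{\boldsymbol\nu}_2)|_1\le\bar L_P(|\bar{\boldsymbol\mu}_1-\bar{\boldsymbol\mu}_2|_1+|\bar{\boldsymbol\nu}_1-\bar{\boldsymbol\nu}_2|_1)$. A policy is $\bar{\boldsymbol\pi}=\{\bar{\boldsymbol\pi}_t\}_{t\ge0}$, $\bar{\boldsymbol\pi}_t=(\bar\pi_k^t)_k$, $\bar\pi_k^t:\mathcal X\times\mathcal P^K(\mathcal X)\to\mathcal P(\mathcal U)$. Dynamics: conditioned on all states at time $t$, actions are independent across agents with $u_{j,k}^t\sim\bar\pi_k^t(x_{j,k}^t,\bar{\boldsymbol\mu}_t^{\mathbf N})$; conditioned on states and actions, next states are independent with $x_{j,k}^{t+1}\sim\bar P_k(x_{j,k}^t,u_{j,k}^t,\bar{\boldsymbol\mu}_t^{\mathbf N},\bar{\boldsymbol\nu}_t^{\mathbf N})$. Mean-field operators: $\bar\nu^{\mathrm{MF}}(\bar{\boldsymbol\mu},\bar{\boldsymbol\pi})(u,k)=\sum_x\bar\pi_k(x,\bar{\boldsymbol\mu})(u)\bar{\boldsymbol\mu}(x,k)$; $\bar P^{\mathrm{MF}}(\bar{\boldsymbol\mu},\bar{\boldsymbol\pi})(x',k)=\sum_{x,u}\bar{\boldsymbol\mu}(x,k)\bar\pi_k(x,\bar{\boldsymbol\mu})(u)\bar P_k(x,u,\bar{\boldsymbol\mu},\bar\nu^{\mathrm{MF}}(\bar{\boldsymbol\mu},\bar{\boldsymbol\pi}))(x')$;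 $\bar r_k^{\mathrm{MF}}(\bar{\boldsymbol\mu},\bar{\boldsymbol\pi})=\sum_{x,u}\bar{\boldsymbol\mu}(x,k)\bar\pi_k(x,\bar{\boldsymbol\mu})(u)\bar r_k(x,u,\bar{\boldsymbol\mu},\bar\nu^{\mathrm{MF}}(\bar{\boldsymbol\mu},\bar{\boldsymbol\pi}))$. *)

(* Defs.v *)
From HB Require Import structures.
From mathcomp Require Import all_boot all_order all_algebra.
From mathcomp Require Export reals.
Set Implicit Arguments. Unset Strict Implicit. Unset Printing Implicit Defensive.
Import Order.TTheory GRing.Theory Num.Theory.
Local Open Scope ring_scope.

Section MFDefs.
Variable R : realType.
Variable K : nat.
Variable N : 'I_K -> nat.

(* agents: pairs (k, j) with k a class and j in [N_k] (0-indexed) *)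
Definition agent : finType := {k : 'I_K & 'I_(N k)}.
Definition agt (k : 'I_K) (j : 'I_(N k)) : agent := existT (fun k => 'I_(N k)) k j.

Definition is_dist (A : finType) (p : A -> R) :=
  (forall a, 0 <= p a) /\ \sum_a p a = 1.
(* elements of P^K(A): mu(., k) is a distribution for each class k *)
Definition is_distK (A : finType) (mu : A -> 'I_K -> R) :=
  forall k, is_dist (fun a => mu a k).

Definition l1 (A : finType) (p q : A -> R) := \sum_a `|p a - q a|.
Definition l1K (A : finType) (m1 m2 : A -> 'I_K -> R) :=
  \sum_k \sum_a `|m1 a k - m2 a k|.

Definition emp (A : finType) (c : agent -> A) : A -> 'I_K -> R :=
  fun a k => (N k)%:R^-1 * \sum_(j < N k) (c (agt j) == a)%:R.

Variables X U : finType.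

(* one-step policy pi_t = (pi_k^t)_k, pi_k^t : X x P^K(X) -> P(U) *)
Definition polT := 'I_K -> X -> (X -> 'I_K -> R) -> U -> R.
Definition transT := 'I_K -> X -> U -> (X -> 'I_K -> R) -> (U -> 'I_K -> R) -> X -> R.
Definition rewT := 'I_K -> X -> U -> (X -> 'I_K -> R) -> (U -> 'I_K -> R) -> R.

Definition nuMF (mu : X -> 'I_K -> R) (pit : polT) : U -> 'I_K -> R :=
  fun u k => \sum_x pit k x mu u * mu x k.
Definition PMF (P : transT) (mu : X -> 'I_K -> R) (pit : polT) : X -> 'I_K -> R :=
  fun x' k => \sum_x \sum_u mu x k * pit k x mu u * P k x u mu (nuMF mu pit) x'.
Definition rMF (r : rewT) (mu : X -> 'I_K -> R) (pit : polT) (k : 'I_K) : R :=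
  \sum_x \sum_u mu x k * pit k x mu u * r k x u mu (nuMF mu pit).

Definition sconf : finType := {ffun agent -> X}.
Definition aconf : finType := {ffun agent -> U}.

(* conditional law of the joint action given the joint state (independent) *)
Definition actker (pit : polT) (s : sconf) (a : aconf) : R :=
  \prod_i pit (tag i) (s i) (emp s) (a i).
(* conditional law of the next joint state given states and actions *)
Definition transker (P : transT) (s : sconf) (a : aconf) (s' : sconf) : R :=
  \prod_i P (tag i) (s i) (a i) (emp s) (emp a) (s' i).

Fixpoint law (p0 : sconf -> R) (pi : nat -> polT) (P : transT) (t : nat)
  (s' : sconf) : R :=
  match t with
  | 0 => p0 s'
  | t.+1 => \sum_s \sum_a law p0 pi P t s * actker (pi t) s a * transker P s a s'
  end.

End MFDefs.
Arguments emp {R K N A} c _ _.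

(* Main.v *)
Require Import Defs.
From HB Require Import structures.
From mathcomp Require Import all_boot all_order all_algebra.
From mathcomp Require Import reals.
From mathcomp Require Import ring lra.
Import Order.TTheory GRing.Theory Num.Theory.
Local Open Scope ring_scope.

Section Gen.
Variable R : realType.

Lemma sqr_abs (x : R) : `|x| ^+ 2 = x ^+ 2.
Proof. by rewrite real_normK // num_real. Qed.

Lemma var_id (I : finType) (w y : I -> R) (c : R) :
  \sum_i w i * (y i - c) ^+ 2 =
  \sum_i w i * y i ^+ 2 - 2 * c * (\sum_i w i * y i) + c ^+ 2 * \sum_i w i.
Proof.
rewrite mulr_sumr [c ^+ 2 * _]mulr_sumr -sumrB -big_split /=.
by apply: eq_bigr => i _; rewrite sqrrB; ring.
Qed.

Lemma cs1 (I : finType) (w z : I -> R) : (forall i, 0 <= w i) -> \sum_i w i = 1 ->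
  \sum_i w i * `|z i| <= Num.sqrt (\sum_i w i * z i ^+ 2).
Proof.
move=> w0 w1.
have E0 : 0 <= \sum_i w i * `|z i| by apply: sumr_ge0 => i _; apply: mulr_ge0.
have H : 0 <= \sum_i w i * (`|z i| - \sum_i w i * `|z i|) ^+ 2.
  by apply: sumr_ge0 => i _; rewrite mulr_ge0 // sqr_ge0.
rewrite var_id w1 in H.
have E2 : \sum_i w i * `|z i| ^+ 2 = \sum_i w i * z i ^+ 2.
  by apply: eq_bigr => i _; rewrite sqr_abs.
rewrite E2 in H.
rewrite -(ger0_norm E0) -sqrtr_sqr; apply: ler_wsqrtr.
move: H; set E := \sum_i w i * `|z i|; set F := \sum_i w i * z i ^+ 2.
move=> H; nra.
Qed.

Lemma sqrt_cs (A : finType) (c : A -> R) : (forall a, 0 <= c a) ->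
  \sum_a Num.sqrt (c a) <= Num.sqrt (#|A|%:R) * Num.sqrt (\sum_a c a).
Proof.
move=> c0; case: (posnP #|A|) => [/card0_eq H0|Hn].
  rewrite big1; first by rewrite mulr_ge0 // sqrtr_ge0.
  by move=> a _; have := H0 a; rewrite !inE.
set n : R := #|A|%:R.
have n0 : 0 < n by rewrite ltr0n.
have w0 : forall a : A, 0 <= n^-1 by move=> _; rewrite invr_ge0 ltW.
have w1 : \sum_(a : A) n^-1 = 1 by rewrite sumr_const -mulr_natr mulVf ?gt_eqF.
have := @cs1 A (fun _ => n^-1) (fun a => Num.sqrt (c a)) w0 w1.
have -> : \sum_i n^-1 * Num.sqrt (c i) ^+ 2 = n^-1 * \sum_i c i.
  by rewrite mulr_sumr; apply: eq_bigr => i _; rewrite sqr_sqrtr.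
have -> : \sum_i n^-1 * `|Num.sqrt (c i)| = n^-1 * \sum_i Num.sqrt (c i).
  by rewrite mulr_sumr; apply: eq_bigr => i _; rewrite ger0_norm // sqrtr_ge0.
have ni : 0 <= n^-1 by rewrite invr_ge0 ltW.
rewrite sqrtrM // sqrtrV; last exact: ltW.
have sn : 0 < Num.sqrt n by rewrite sqrtr_gt0.
have nn : n = Num.sqrt n * Num.sqrt n by rewrite -expr2 sqr_sqrtr // ltW.
move=> H; move: H; rewrite -(ler_pM2l n0) mulrA mulfV ?gt_eqF // mul1r => H.
apply: (le_trans H); rewrite le_eqVlt; apply/orP; left; apply/eqP.
rewrite {1}nn; field; by rewrite gt_eqF.
Qed.

Section Prod.
Variables (I V : finType) (q : I -> V -> R).
Definition pw (a : {ffun I -> V}) := \prod_i q i (a i).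

Lemma pw_prod (G : I -> V -> R) :
  \sum_a pw a * \prod_i G i (a i) = \prod_i \sum_v q i v * G i v.
Proof.
rewrite bigA_distr_bigA /=; apply: eq_bigr => a _; by rewrite /pw -big_split.
Qed.

Hypothesis q0 : forall i v, 0 <= q i v.
Hypothesis q1 : forall i, \sum_v q i v = 1.

Lemma pw_ge0 a : 0 <= pw a.
Proof. by apply: prodr_ge0 => i _. Qed.

Lemma pw_sum1 : \sum_a pw a = 1.
Proof.
transitivity (\sum_a pw a * \prod_(i : I) (1:R)).
  by apply: eq_bigr => a _; rewrite big1_eq mulr1.
rewrite (pw_prod (fun _ _ => 1)); apply: big1 => i _.
under eq_bigr do rewrite mulr1; exact: q1.
Qed.

Lemma pw_one i (g : V -> R) :
  \sum_a pw a * g (a i) = \sum_v q i v * g v.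
Proof.
have := pw_prod (fun j v => if j == i then g v else 1).
have -> : \prod_i0 (\sum_v q i0 v * (if i0 == i then g v else 1)) = \sum_v q i v * g v.
  rewrite (bigD1 i) //= eqxx [X in _ * X]big1 ?mulr1 //.
  move=> j /negbTE ->; under eq_bigr do rewrite mulr1; exact: q1.
move=> <-; apply: eq_bigr => a _; congr (_ * _).
rewrite (bigD1 i) //= eqxx [X in _ * X]big1 ?mulr1 //.
by move=> j /negbTE ->.
Qed.

Lemma pw_two i i' (f h : V -> R) : i != i' ->
  \sum_a pw a * (f (a i) * h (a i')) = (\sum_v q i v * f v) * (\sum_v q i' v * h v).
Proof.
move=> nii.
have ni' : (i' == i) = false by rewrite eq_sym (negbTE nii).
have := pw_prod (fun j v => if j == i then f v else if j == i' then h v else 1).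
have -> : \prod_j (\sum_v q j v * (if j == i then f v else if j == i' then h v else 1))
   = (\sum_v q i v * f v) * (\sum_v q i' v * h v).
  rewrite (bigD1 i) // (bigD1 i') /=; last by rewrite eq_sym.
  rewrite eqxx ni' eqxx [X in _ * (_ * X)]big1 ?mulr1 //.
  move=> j /andP [/negbTE -> /negbTE ->]; under eq_bigr do rewrite mulr1; exact: q1.
move=> <-; apply: eq_bigr => a _; congr (_ * _).
rewrite (bigD1 i) // (bigD1 i') /=; last by rewrite eq_sym.
rewrite eqxx ni' eqxx [X in _ * (_ * X)]big1 ?mulr1 //.
by move=> j /andP [/negbTE -> /negbTE ->].
Qed.

Lemma zero_mean i (Y : V -> R) (m : R) : m = \sum_v q i v * Y v ->
  \sum_v q i v * (Y v - m) = 0.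
Proof.
move=> ->; under eq_bigr do rewrite mulrBr.
by rewrite sumrB -mulr_suml q1 mul1r subrr.
Qed.

Lemma pw_var (J : finType) (g : J -> I) (ginj : injective g) (Y : J -> V -> R)
  (m : J -> R) : (forall j, m j = \sum_v q (g j) v * Y j v) ->
  \sum_a pw a * (\sum_j (Y j (a (g j)) - m j)) ^+ 2
  <= \sum_j \sum_v q (g j) v * Y j v ^+ 2.
Proof.
move=> Hm.
have E : forall a, (\sum_j (Y j (a (g j)) - m j)) ^+ 2 =
   \sum_j \sum_j' (Y j (a (g j)) - m j) * (Y j' (a (g j')) - m j').
  move=> a; rewrite expr2 mulr_suml; apply: eq_bigr => j _; by rewrite mulr_sumr.
under eq_bigr do rewrite E mulr_sumr.
rewrite exchange_big /=; apply: ler_sum => j _.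
under eq_bigr do rewrite mulr_sumr.
rewrite exchange_big /= (bigD1 j) //= [X in _ + X]big1 ?addr0; last first.
  move=> j' /negbTE nj.
  rewrite (pw_two (g j) (g j') (fun v => Y j v - m j) (fun v => Y j' v - m j')).
    by rewrite zero_mean ?mul0r // Hm.
  by apply/negP => /eqP /ginj /eqP; rewrite eq_sym nj.
rewrite (pw_one (g j) (fun v => (Y j v - m j) * (Y j v - m j))).
have H := var_id _ (q (g j)) (Y j) (m j); rewrite q1 -Hm in H.
have -> : \sum_v q (g j) v * ((Y j v - m j) * (Y j v - m j)) =
  \sum_v q (g j) v * (Y j v - m j) ^+ 2 by apply: eq_bigr => v _; rewrite expr2.
rewrite H; clear H.
have := sqr_ge0 (m j); set A := \sum_v _; set mm := m j; move=> H; nra.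
Qed.

Lemma pw_dev (J : finType) (g : J -> I) (ginj : injective g) (Y : J -> V -> R)
  (m : J -> R) : (forall j, m j = \sum_v q (g j) v * Y j v) ->
  \sum_a pw a * `|\sum_j (Y j (a (g j)) - m j)|
  <= Num.sqrt (\sum_j \sum_v q (g j) v * Y j v ^+ 2).
Proof.
move=> Hm; apply: (le_trans (cs1 _ pw (fun a => \sum_j (Y j (a (g j)) - m j)) pw_ge0 pw_sum1)).
apply: ler_wsqrtr; exact: pw_var.
Qed.

Lemma pw_devW (J W : finType) (g : J -> I) (ginj : injective g)
  (Y : J -> V -> W -> R) (m : J -> W -> R) (C : R) : 0 <= C ->
  (forall j w, m j w = \sum_v q (g j) v * Y j v w) ->
  (forall j v, \sum_w Y j v w ^+ 2 <= C ^+ 2) ->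
  \sum_w \sum_a pw a * `|\sum_j (Y j (a (g j)) w - m j w)|
  <= C * Num.sqrt (#|W|%:R) * Num.sqrt (#|J|%:R).
Proof.
move=> C0 Hm HC.
apply: (le_trans (ler_sum _ (fun w _ => pw_dev J g ginj (fun j v => Y j v w) (fun j => m j w) (fun j => Hm j w)))).
apply: (le_trans (sqrt_cs _ (fun w => \sum_j \sum_v q (g j) v * Y j v w ^+ 2) _)).
  by move=> w; apply: sumr_ge0 => j _; apply: sumr_ge0 => v _; rewrite mulr_ge0 // sqr_ge0.
have H : \sum_w \sum_j \sum_v q (g j) v * Y j v w ^+ 2 <= #|J|%:R * C ^+ 2.
  rewrite exchange_big /=.
  have -> : #|J|%:R * C ^+ 2 = \sum_(j : J) C ^+ 2 by rewrite sumr_const mulr_natl.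
  apply: ler_sum => j _; rewrite exchange_big /=.
  apply: (@le_trans _ _ (\sum_v q (g j) v * C ^+ 2)); last by rewrite -mulr_suml q1 mul1r.
  apply: ler_sum => v _; rewrite -mulr_sumr; apply: ler_wpM2l => //.
have := ler_wsqrtr H; rewrite sqrtrM ?ler0n // sqrtr_sqr ger0_norm // => H2.
rewrite -mulrA [C * _]mulrC -mulrA; apply: ler_wpM2l; first exact: sqrtr_ge0.
exact: H2.
Qed.

End Prod.
End Gen.

Set Implicit Arguments. Unset Strict Implicit. Unset Printing Implicit Defensive.

Section Model.
Variables (R : realType) (K : nat) (N : 'I_K -> nat).
Hypothesis Npos : forall k, (0 < N k)%N.

Lemma agt_inj k : injective (@agt K N k).
Proof. move=> j1 j2 H. exact: (Eqdep_dec.inj_pair2_eq_dec _ (@eq_comparable _) _ _ _ _ H). Qed.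

Lemma Nk_gt0 k : 0 < (N k)%:R :> R.
Proof. by rewrite ltr0n. Qed.

Lemma sum_ind (A : finType) (b : A) (f : A -> R) : \sum_a (b == a)%:R * f a = f b.
Proof.
rewrite (bigD1 b) //= eqxx mul1r big1 ?addr0 // => a.
by rewrite eq_sym => /negbTE ->; rewrite mul0r.
Qed.

Lemma sum_ind2 (A : finType) (b : A) (f : A -> R) : \sum_a f a * (a == b)%:R = f b.
Proof. by rewrite -(sum_ind b f); apply: eq_bigr => a _; rewrite mulrC eq_sym. Qed.

Lemma emp_avg (A : finType) (c : agent N -> A) k (f : A -> R) :
  \sum_a emp c a k * f a = (N k)%:R^-1 * \sum_(j < N k) f (c (agt j)).
Proof.
rewrite /emp; under eq_bigr do rewrite -mulrA mulr_suml.
rewrite -mulr_sumr exchange_big /=; congr (_ * _); apply: eq_bigr => j _.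
exact: sum_ind.
Qed.

Lemma emp_dist (A : finType) (c : agent N -> A) : is_distK (emp c : A -> 'I_K -> R).
Proof.
move=> k; split.
  move=> a; rewrite /emp mulr_ge0 // ?invr_ge0 ?ler0n //.
  by apply: sumr_ge0 => j _; rewrite ler0n.
have := emp_avg c k (fun _ => 1); under eq_bigr do rewrite mulr1.
move=> ->; rewrite sumr_const card_ord -mulr_natr mul1r mulVf //.
by rewrite gt_eqF // Nk_gt0.
Qed.

Definition pol_ok (X U : finType) (pit : polT R K X U) :=
  forall k x mu, is_distK mu -> is_dist (pit k x mu).

Lemma nuMF_dist (X U : finType) (pit : polT R K X U) mu :
  pol_ok pit -> is_distK mu -> is_distK (nuMF mu pit).
Proof.
move=> Hp Hmu k; split.
  move=> u; apply: sumr_ge0 => x _; apply: mulr_ge0.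
    exact: (proj1 (Hp k x mu Hmu)).
  exact: (proj1 (Hmu k)).
rewrite /nuMF exchange_big /=.
under eq_bigr do rewrite -mulr_suml (proj2 (Hp _ _ mu Hmu)) mul1r.
exact: (proj2 (Hmu k)).
Qed.

Lemma nuMF_emp (X U : finType) (pit : polT R K X U) (s : sconf N X) u k :
  nuMF (emp s) pit u k = (N k)%:R^-1 * \sum_(j < N k) pit k (s (agt j)) (emp s) u.
Proof.
rewrite /nuMF; under eq_bigr do rewrite mulrC.
exact: (emp_avg s k (fun x => pit k x (emp s) u)).
Qed.

Lemma dev_ind (V : finType) (q : agent N -> V -> R)
  (q0 : forall i v, 0 <= q i v) (q1 : forall i, \sum_v q i v = 1) k :
  \sum_v \sum_(a : {ffun agent N -> V}) @pw R _ _ q a *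
     `|emp a v k - (N k)%:R^-1 * \sum_(j < N k) q (agt j) v|
  <= (Num.sqrt (N k)%:R)^-1 * Num.sqrt (#|V|%:R).
Proof.
have Ni : 0 <= (N k)%:R^-1 :> R by rewrite invr_ge0 ler0n.
have E : forall (a : {ffun agent N -> V}) v, emp a v k - (N k)%:R^-1 * \sum_(j < N k) q (agt j) v
   = (N k)%:R^-1 * \sum_(j < N k) ((a (agt j) == v)%:R - q (agt j) v).
  by move=> a v; rewrite /emp -mulrBr sumrB.
under eq_bigr do under eq_bigr do rewrite E normrM (ger0_norm Ni) mulrCA.
under eq_bigr do rewrite -mulr_sumr.
rewrite -mulr_sumr.
have HC : forall (j : 'I_(N k)) (v : V), \sum_w ((v == w)%:R : R) ^+ 2 <= 1 ^+ 2.
  move=> j v; rewrite expr1n (_ : \sum_w _ = \sum_w (v == w)%:R * (fun _ => 1) w).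
    by rewrite sum_ind.
  by apply: eq_bigr => w _; rewrite mulr1 expr2 -natrM mulnb andbb.
have H := @pw_devW R _ _ q q0 q1 _ _ _ (@agt_inj k) (fun j v w => (v == w)%:R)
   (fun j w => q (agt j) w) 1 ler01 (fun j w => esym (sum_ind2 w (q (agt j)))) HC.
rewrite card_ord mul1r in H.
apply: (le_trans (ler_wpM2l Ni H)).
have sn : 0 < Num.sqrt (N k)%:R :> R by rewrite sqrtr_gt0 Nk_gt0.
have nn : (N k)%:R = Num.sqrt (N k)%:R * Num.sqrt (N k)%:R :> R.
  by rewrite -expr2 sqr_sqrtr // ler0n.
rewrite le_eqVlt; apply/orP; left; apply/eqP.
move: nn sn; set t := Num.sqrt (N k)%:R; move=> -> sn; field; by rewrite gt_eqF.
Qed.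

Definition SS := \sum_k (Num.sqrt (N k)%:R)^-1 : R.

Lemma SS_ge0 : 0 <= SS.
Proof. by apply: sumr_ge0 => k _; rewrite invr_ge0 sqrtr_ge0. Qed.

Lemma bound_a (X U : finType) (pit : polT R K X U) (Hp : pol_ok pit) (s : sconf N X) :
  \sum_(a : aconf N U) actker pit s a * l1K (emp a) (nuMF (emp s) pit)
  <= SS * Num.sqrt (#|U|%:R).
Proof.
pose q := fun (i : agent N) v => pit (tag i) (s i) (emp s) v.
have q0 : forall i v, 0 <= q i v := fun i v => proj1 (Hp _ _ _ (emp_dist s)) v.
have q1 : forall i, \sum_v q i v = 1 := fun i => proj2 (Hp _ _ _ (emp_dist s)).
rewrite /l1K; under eq_bigr do rewrite mulr_sumr.
rewrite exchange_big /SS mulr_suml /=; apply: ler_sum => k _.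
under eq_bigr do rewrite mulr_sumr.
rewrite exchange_big /=.
apply: le_trans (dev_ind q0 q1 k).
apply: ler_sum => u _; apply: ler_sum => a _.
by rewrite nuMF_emp.
Qed.

Lemma l1K_refl (A : finType) (mu : A -> 'I_K -> R) : l1K mu mu = 0.
Proof. by apply: big1 => k _; apply: big1 => a _; rewrite subrr normr0. Qed.

Lemma rMF_emp (X U : finType) (r : rewT R K X U) (pit : polT R K X U) (s : sconf N X) k :
  rMF r (emp s) pit k = (N k)%:R^-1 * \sum_(j < N k) \sum_u
     pit k (s (agt j)) (emp s) u * r k (s (agt j)) u (emp s) (nuMF (emp s) pit).
Proof.
rewrite /rMF; under eq_bigr do (under eq_bigr do rewrite -mulrA; rewrite -mulr_sumr).
exact: (emp_avg s k (fun x => \sum_u pit k x (emp s) u * r k x u (emp s) (nuMF (emp s) pit))).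
Qed.

Lemma PMF_emp (X U : finType) (P : transT R K X U) (pit : polT R K X U) (s : sconf N X) x' k :
  PMF P (emp s) pit x' k = (N k)%:R^-1 * \sum_(j < N k) \sum_u
     pit k (s (agt j)) (emp s) u * P k (s (agt j)) u (emp s) (nuMF (emp s) pit) x'.
Proof.
rewrite /PMF; under eq_bigr do (under eq_bigr do rewrite -mulrA; rewrite -mulr_sumr).
exact: (emp_avg s k (fun x => \sum_u pit k x (emp s) u * P k x u (emp s) (nuMF (emp s) pit) x')).
Qed.

Lemma nonempty_conf (V : finType) (K0 : (0 < K)%N) (a : {ffun agent N -> V}) : (0 < #|V|)%N.
Proof.
pose k0 := Ordinal K0; pose j0 : 'I_(N k0) := Ordinal (Npos k0).
by apply/card_gt0P; exists (a (agt j0)).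
Qed.

Lemma sqrt_card_ge1 (V : finType) : (0 < #|V|)%N -> 1 <= Num.sqrt (#|V|%:R) :> R.
Proof. move=> H; have H1 : 1 <= #|V|%:R :> R by rewrite ler1n. by have := ler_wsqrtr H1; rewrite sqrtr1. Qed.

Lemma Nk_le_Npop k : (N k <= \sum_k N k)%N.
Proof. by rewrite (bigD1 k) //= leq_addr. Qed.

Lemma Npop_gt0 : (0 < K)%N -> 0 < (\sum_k N k)%:R :> R.
Proof.
move=> K0; rewrite ltr0n; apply: (leq_trans (Npos (Ordinal K0))); exact: Nk_le_Npop.
Qed.

Lemma frac_bound k (Np : R) : (N k)%:R <= Np ->
  Np^-1 * Num.sqrt (N k)%:R <= (Num.sqrt (N k)%:R)^-1.
Proof.
move=> H.
have n0 := Nk_gt0 k.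
have sn : 0 < Num.sqrt (N k)%:R :> R by rewrite sqrtr_gt0.
have nn : (N k)%:R = Num.sqrt (N k)%:R * Num.sqrt (N k)%:R :> R.
  by rewrite -expr2 sqr_sqrtr // ltW.
have Np0 : 0 < Np by apply: lt_le_trans H.
have {H} : Num.sqrt (N k)%:R * Num.sqrt (N k)%:R <= Np by rewrite -nn.
move: sn; set t := Num.sqrt _ => sn H.
rewrite -(ler_pM2l Np0) mulrA mulfV ?gt_eqF // mul1r.
by rewrite -(ler_pM2r sn) mulfVK ?gt_eqF.
Qed.

Lemma dev_bounded (V : finType) (q : agent N -> V -> R)
  (q0 : forall i v, 0 <= q i v) (q1 : forall i, \sum_v q i v = 1) k
  (Y : 'I_(N k) -> V -> R) (m : 'I_(N k) -> R) (C : R) :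
  0 <= C -> (forall j v, `|Y j v| <= C) ->
  (forall j, m j = \sum_v q (agt j) v * Y j v) ->
  \sum_(a : {ffun agent N -> V}) @pw R _ _ q a * `|\sum_j (Y j (a (agt j)) - m j)|
  <= C * Num.sqrt (N k)%:R.
Proof.
move=> C0 HC Hm.
apply: le_trans (@pw_dev R _ _ q q0 q1 _ _ (@agt_inj k) Y m Hm) _.
have H : \sum_j \sum_v q (agt j) v * Y j v ^+ 2 <= (N k)%:R * C ^+ 2.
  have -> : (N k)%:R * C ^+ 2 = \sum_(j < N k) C ^+ 2 by rewrite sumr_const card_ord mulr_natl.
  apply: ler_sum => j _.
  apply: (@le_trans _ _ (\sum_v q (agt j) v * C ^+ 2)); last by rewrite -mulr_suml q1 mul1r.
  apply: ler_sum => v _; apply: ler_wpM2l => //.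
  rewrite -sqr_abs; have := HC j v; have := normr_ge0 (Y j v); set y := `|Y j v|.
  move=> *; nra.
have := ler_wsqrtr H; rewrite sqrtrM ?ler0n // sqrtr_sqr ger0_norm // => H2.
by rewrite mulrC.
Qed.

Lemma bound_b (X U : finType) (r : rewT R K X U) (pit : polT R K X U) (Hp : pol_ok pit)
  (K0 : (0 < K)%N) (MR LR : R) (MR0 : 0 <= MR) (LR0 : 0 <= LR)
  (HMR : forall k x u (mu : X -> 'I_K -> R) (nu : U -> 'I_K -> R),
      is_distK mu -> is_distK nu -> `|r k x u mu nu| <= MR)
  (HLR : forall k x u (mu1 mu2 : X -> 'I_K -> R) (nu1 nu2 : U -> 'I_K -> R),
      is_distK mu1 -> is_distK mu2 -> is_distK nu1 -> is_distK nu2 ->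
      `|r k x u mu1 nu1 - r k x u mu2 nu2| <= LR * (l1K mu1 mu2 + l1K nu1 nu2))
  (s : sconf N X) :
  \sum_(a : aconf N U) actker pit s a *
      `| ((\sum_k N k)%N%:R)^-1 * \sum_k \sum_(j < N k)
            r k (s (agt j)) (a (agt j)) (emp s) (emp a)
         - \sum_k ((N k)%:R / (\sum_k N k)%N%:R) * rMF r (emp s) pit k |
    <= (MR + LR) * SS * Num.sqrt (#|U|%:R).
Proof.
case: (posnP #|U|) => [U0|U0].
  rewrite big1; first by rewrite !mulr_ge0 ?sqrtr_ge0 ?SS_ge0 // addr_ge0.
  by move=> a _; have := nonempty_conf K0 a; rewrite U0.
have U1 := sqrt_card_ge1 U0.
set Np := (\sum_k N k)%N%:R.
have Np0 : 0 < Np := Npop_gt0 K0.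
have Ni : 0 <= Np^-1 by rewrite invr_ge0 ltW.
have Hmu : is_distK (emp s : X -> 'I_K -> R) := emp_dist s.
have Hnu0 : is_distK (nuMF (emp s) pit) := nuMF_dist Hp Hmu.
pose q := fun (i : agent N) v => pit (tag i) (s i) (emp s) v.
have q0 : forall i v, 0 <= q i v := fun i v => proj1 (Hp _ _ _ (emp_dist s)) v.
have q1 : forall i, \sum_v q i v = 1 := fun i => proj2 (Hp _ _ _ (emp_dist s)).
pose m := fun k (j : 'I_(N k)) => \sum_u pit k (s (agt j)) (emp s) u *
             r k (s (agt j)) u (emp s) (nuMF (emp s) pit).
pose B := fun (a : aconf N U) k => `|\sum_(j < N k) (r k (s (agt j)) (a (agt j)) (emp s) (nuMF (emp s) pit) - m k j)|.
have pt : forall a : aconf N U,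
   `| Np^-1 * \sum_k \sum_(j < N k) r k (s (agt j)) (a (agt j)) (emp s) (emp a)
         - \sum_k ((N k)%:R / Np) * rMF r (emp s) pit k |
   <= LR * l1K (emp a) (nuMF (emp s) pit) + Np^-1 * \sum_k B a k.
  move=> a.
  have E1 : \sum_k ((N k)%:R / Np) * rMF r (emp s) pit k = Np^-1 * \sum_k \sum_(j < N k) m k j.
    rewrite mulr_sumr; apply: eq_bigr => k _; rewrite rMF_emp mulrA; congr (_ * _).
    have := Nk_gt0 k; move: Np0; set n := (N k)%:R => H1 H2; field.
    by rewrite !gt_eqF.
  rewrite E1 -mulrBr -sumrB.
  have E2 : \sum_k (\sum_(j < N k) r k (s (agt j)) (a (agt j)) (emp s) (emp a) - \sum_(j < N k) m k j)
    = \sum_k (\sum_(j < N k) (r k (s (agt j)) (a (agt j)) (emp s) (emp a) - r k (s (agt j)) (a (agt j)) (emp s) (nuMF (emp s) pit))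
      + \sum_(j < N k) (r k (s (agt j)) (a (agt j)) (emp s) (nuMF (emp s) pit) - m k j)).
    apply: eq_bigr => k _; rewrite -sumrB -big_split /=; apply: eq_bigr => j _; ring.
  rewrite E2 big_split /= normrM (ger0_norm Ni).
  apply: (le_trans (ler_wpM2l Ni (ler_normD _ _))).
  rewrite mulrDr; apply: lerD; last first.
    by apply: ler_wpM2l; [rewrite invr_ge0 ltW | exact: ler_norm_sum].
  apply: (@le_trans _ _ (Np^-1 * \sum_k \sum_(j < N k) (LR * l1K (emp a) (nuMF (emp s) pit)))).
    apply: ler_wpM2l; first by rewrite invr_ge0 ltW.
    apply: (le_trans (ler_norm_sum _ _ _)); apply: ler_sum => k _.
    apply: (le_trans (ler_norm_sum _ _ _)); apply: ler_sum => j _.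
    have := HLR k (s (agt j)) (a (agt j)) _ _ _ _ Hmu Hmu (emp_dist a) Hnu0.
    by rewrite l1K_refl add0r.
  rewrite le_eqVlt; apply/orP; left; apply/eqP.
  under eq_bigr do rewrite sumr_const card_ord.
  by rewrite sumrMnr -mulr_natr -/Np mulrC mulfK ?gt_eqF.
apply: (le_trans (ler_sum _ (fun a _ => ler_wpM2l (@pw_ge0 R _ _ q q0 a) (pt a)))).
under eq_bigr do rewrite mulrDr.
rewrite big_split /=.
have HA : \sum_a actker pit s a * (LR * l1K (emp a) (nuMF (emp s) pit)) <= LR * (SS * Num.sqrt (#|U|%:R)).
  rewrite (eq_bigr (fun a => LR * (actker pit s a * l1K (emp a) (nuMF (emp s) pit)))); last first.
    by move=> a _; rewrite mulrCA.
  rewrite -mulr_sumr; apply: ler_wpM2l => //; exact: bound_a.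
have HB : \sum_a actker pit s a * (Np^-1 * \sum_k B a k) <= MR * SS.
  rewrite (eq_bigr (fun a => Np^-1 * \sum_k actker pit s a * B a k)); last first.
    by move=> a _; rewrite mulrCA mulr_sumr.
  rewrite -mulr_sumr exchange_big /SS mulr_sumr [MR * _]mulr_sumr /=; apply: ler_sum => k _.
  have HC : forall (j : 'I_(N k)) v, `|r k (s (agt j)) v (emp s) (nuMF (emp s) pit)| <= MR.
    by move=> j v; apply: HMR.
  have Hm : forall (j : 'I_(N k)), m k j = \sum_v q (agt j) v * r k (s (agt j)) v (emp s) (nuMF (emp s) pit).
    by [].
  have D := @dev_bounded _ q q0 q1 k (fun j v => r k (s (agt j)) v (emp s) (nuMF (emp s) pit)) (m k) MR MR0 HC Hm.
  apply: (le_trans (ler_wpM2l Ni D)).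
  rewrite mulrCA; apply: ler_wpM2l => //; apply: frac_bound.
  by rewrite /Np ler_nat Nk_le_Npop.
apply: (le_trans (lerD HA HB)).
have := SS_ge0; move: U1; set sU := Num.sqrt _; move=> U1 S0.
have H1 : MR * SS <= MR * SS * sU by rewrite ler_peMr // mulr_ge0.
rewrite !mulrDl mulrA; lra.
Qed.

Definition M1 (X U : finType) (P : transT R K X U) (s : sconf N X) (a : aconf N U)
  : X -> 'I_K -> R := fun x' k =>
  (N k)%:R^-1 * \sum_(j < N k) P k (s (agt j)) (a (agt j)) (emp s) (emp a) x'.
Definition M2 (X U : finType) (P : transT R K X U) (pit : polT R K X U) (s : sconf N X) (a : aconf N U)
  : X -> 'I_K -> R := fun x' k =>
  (N k)%:R^-1 * \sum_(j < N k) P k (s (agt j)) (a (agt j)) (emp s) (nuMF (emp s) pit) x'.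

Section C.
Variables (X U : finType) (P : transT R K X U) (pit : polT R K X U) (LP : R).
Hypothesis Hp : pol_ok pit.
Hypothesis LP0 : 0 <= LP.
Hypothesis HPd : forall k x u (mu : X -> 'I_K -> R) (nu : U -> 'I_K -> R),
      is_distK mu -> is_distK nu -> is_dist (P k x u mu nu).
Hypothesis HLP : forall k x u (mu1 mu2 : X -> 'I_K -> R) (nu1 nu2 : U -> 'I_K -> R),
      is_distK mu1 -> is_distK mu2 -> is_distK nu1 -> is_distK nu2 ->
      l1 (P k x u mu1 nu1) (P k x u mu2 nu2) <= LP * (l1K mu1 mu2 + l1K nu1 nu2).

Lemma c_term1 (s : sconf N X) (a : aconf N U) :
  \sum_(s' : sconf N X) transker P s a s' *
     (\sum_k \sum_x' `|emp s' x' k - M1 P s a x' k|) <= SS * Num.sqrt (#|X|%:R).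
Proof.
pose q := fun (i : agent N) x' => P (tag i) (s i) (a i) (emp s) (emp a) x'.
have q0 : forall i v, 0 <= q i v := fun i v => proj1 (HPd _ _ _ (emp_dist s) (emp_dist a)) v.
have q1 : forall i, \sum_v q i v = 1 := fun i => proj2 (HPd _ _ _ (emp_dist s) (emp_dist a)).
under eq_bigr do rewrite mulr_sumr.
rewrite exchange_big /SS mulr_suml /=; apply: ler_sum => k _.
under eq_bigr do rewrite mulr_sumr.
rewrite exchange_big /=.
exact: (dev_ind q0 q1 k).
Qed.

Lemma c_term2 (s : sconf N X) (a : aconf N U) :
  \sum_k \sum_x' `|M1 P s a x' k - M2 P pit s a x' k|
  <= K%:R * LP * l1K (emp a) (nuMF (emp s) pit).
Proof.
have Hmu : is_distK (emp s : X -> 'I_K -> R) := emp_dist s.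
have Hnu0 : is_distK (nuMF (emp s) pit) := nuMF_dist Hp Hmu.
have -> : K%:R * LP * l1K (emp a) (nuMF (emp s) pit) =
    \sum_(k < K) LP * l1K (emp a) (nuMF (emp s) pit) by rewrite sumr_const card_ord -mulrA mulr_natl.
apply: ler_sum => k _.
have Ni : 0 <= (N k)%:R^-1 :> R by rewrite invr_ge0 ler0n.
rewrite /M1 /M2.
under eq_bigr do rewrite -mulrBr -sumrB normrM (ger0_norm Ni).
rewrite -mulr_sumr.
apply: (@le_trans _ _ ((N k)%:R^-1 * \sum_(j < N k) LP * l1K (emp a) (nuMF (emp s) pit))).
  apply: ler_wpM2l => //.
  apply: (@le_trans _ _ (\sum_x' \sum_(j < N k) `|P k (s (agt j)) (a (agt j)) (emp s) (emp a) x' -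
          P k (s (agt j)) (a (agt j)) (emp s) (nuMF (emp s) pit) x'|)).
    by apply: ler_sum => x' _; exact: ler_norm_sum.
  rewrite exchange_big /=; apply: ler_sum => j _.
  have := HLP k (s (agt j)) (a (agt j)) Hmu Hmu (emp_dist a) Hnu0.
  by rewrite l1K_refl add0r.
rewrite (_ : \sum_(j < N k) _ = (N k)%:R * (LP * l1K (emp a) (nuMF (emp s) pit))); last by rewrite sumr_const card_ord mulr_natl.
by rewrite mulKf // gt_eqF // Nk_gt0.
Qed.

Lemma dist_le1 (A : finType) (p : A -> R) : is_dist p -> forall a, p a <= 1.
Proof.
move=> [p0 p1] a; rewrite -p1 (bigD1 a) //= lerDl.
by apply: sumr_ge0 => b _.
Qed.

Lemma dist_sq (A : finType) (p : A -> R) : is_dist p -> \sum_a p a ^+ 2 <= 1 ^+ 2.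
Proof.
move=> Hd; rewrite expr1n -(proj2 Hd); apply: ler_sum => a _.
have := dist_le1 Hd a; have := proj1 Hd a; set y := p a => *; nra.
Qed.

Lemma c_term3 (s : sconf N X) :
  \sum_(a : aconf N U) actker pit s a *
    (\sum_k \sum_x' `|M2 P pit s a x' k - PMF P (emp s) pit x' k|)
  <= SS * Num.sqrt (#|X|%:R).
Proof.
have Hmu : is_distK (emp s : X -> 'I_K -> R) := emp_dist s.
have Hnu0 : is_distK (nuMF (emp s) pit) := nuMF_dist Hp Hmu.
pose q := fun (i : agent N) v => pit (tag i) (s i) (emp s) v.
have q0 : forall i v, 0 <= q i v := fun i v => proj1 (@Hp _ _ _ (emp_dist s)) v.
have q1 : forall i, \sum_v q i v = 1 := fun i => proj2 (@Hp _ _ _ (emp_dist s)).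
under eq_bigr do rewrite mulr_sumr.
rewrite exchange_big /SS mulr_suml /=; apply: ler_sum => k _.
under eq_bigr do rewrite mulr_sumr.
rewrite exchange_big /=.
have Ni : 0 <= (N k)%:R^-1 :> R by rewrite invr_ge0 ler0n.
pose Y := fun (j : 'I_(N k)) u x' => P k (s (agt j)) u (emp s) (nuMF (emp s) pit) x'.
pose m := fun (j : 'I_(N k)) x' => \sum_u q (agt j) u * Y j u x'.
have E : forall (a : aconf N U) x', M2 P pit s a x' k - PMF P (emp s) pit x' k =
   (N k)%:R^-1 * \sum_(j < N k) (Y j (a (agt j)) x' - m j x').
  by move=> a x'; rewrite /M2 PMF_emp -mulrBr sumrB.
under eq_bigr do under eq_bigr do rewrite E normrM (ger0_norm Ni) mulrCA.
under eq_bigr do rewrite -mulr_sumr.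
rewrite -mulr_sumr.
have HC : forall (j : 'I_(N k)) u, \sum_x' Y j u x' ^+ 2 <= 1 ^+ 2.
  by move=> j u; apply: dist_sq; apply: HPd.
have H := @pw_devW R _ _ q q0 q1 _ _ _ (@agt_inj k) Y m 1 ler01 (fun j w => erefl) HC.
rewrite card_ord mul1r in H.
apply: (le_trans (ler_wpM2l Ni H)).
have sn : 0 < Num.sqrt (N k)%:R :> R by rewrite sqrtr_gt0 Nk_gt0.
have nn : (N k)%:R = Num.sqrt (N k)%:R * Num.sqrt (N k)%:R :> R.
  by rewrite -expr2 sqr_sqrtr // ler0n.
rewrite le_eqVlt; apply/orP; left; apply/eqP.
move: nn sn; set t := Num.sqrt (N k)%:R; move=> -> sn; field; by rewrite gt_eqF.
Qed.

Lemma bound_c (K0 : (0 < K)%N) (s : sconf N X) :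
  \sum_(a : aconf N U) actker pit s a *
    (\sum_(s' : sconf N X) transker P s a s' * l1K (emp s') (PMF P (emp s) pit))
  <= (2 + K%:R * LP) * SS * Num.sqrt ((#|X| * #|U|)%:R).
Proof.
have S0 := SS_ge0.
have KL : 0 <= K%:R * LP by rewrite mulr_ge0 ?ler0n.
case: (posnP #|U|) => [U0|U0].
  rewrite big1; first by rewrite !mulr_ge0 ?sqrtr_ge0 // addr_ge0.
  by move=> a _; have := nonempty_conf K0 a; rewrite U0.
have X0 := nonempty_conf K0 s.
have U1 := sqrt_card_ge1 U0.
have X1 := sqrt_card_ge1 X0.
rewrite natrM sqrtrM ?ler0n //.
pose T2 := fun a => \sum_k \sum_x' `|M1 P s a x' k - M2 P pit s a x' k|.
pose T3 := fun a => \sum_k \sum_x' `|M2 P pit s a x' k - PMF P (emp s) pit x' k|.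
have pt : forall a : aconf N U,
   \sum_(s' : sconf N X) transker P s a s' * l1K (emp s') (PMF P (emp s) pit)
   <= SS * Num.sqrt (#|X|%:R) + T2 a + T3 a.
  move=> a.
  pose qa := fun (i : agent N) x' => P (tag i) (s i) (a i) (emp s) (emp a) x'.
  have qa0 : forall i v, 0 <= qa i v := fun i v => proj1 (HPd _ _ _ (emp_dist s) (emp_dist a)) v.
  have qa1 : forall i, \sum_v qa i v = 1 := fun i => proj2 (HPd _ _ _ (emp_dist s) (emp_dist a)).
  have tri : forall s' : sconf N X, l1K (emp s') (PMF P (emp s) pit) <=
      \sum_k \sum_x' `|emp s' x' k - M1 P s a x' k| + T2 a + T3 a.
    move=> s'; rewrite /l1K /T2 /T3 -!big_split /=; apply: ler_sum => k _.
    rewrite -!big_split /=; apply: ler_sum => x' _.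
    set e := emp s' x' k; set p := PMF _ _ _ x' k; set m1 := M1 _ _ _ x' k; set m2 := M2 _ _ _ _ x' k.
    rewrite (_ : e - p = (e - m1) + (m1 - m2) + (m2 - p)); last by ring.
    apply: le_trans (ler_normD _ _) _; rewrite lerD2r; exact: ler_normD.
  apply: (le_trans (ler_sum _ (fun s' _ => ler_wpM2l (@pw_ge0 R _ _ qa qa0 s') (tri s')))).
  under eq_bigr do rewrite mulrDr mulrDr.
  rewrite !big_split /= -!mulr_suml (@pw_sum1 R _ _ qa qa1) !mul1r.
  rewrite lerD2r lerD2r; exact: c_term1.
pose q := fun (i : agent N) v => pit (tag i) (s i) (emp s) v.
have q0 : forall i v, 0 <= q i v := fun i v => proj1 (@Hp _ _ _ (emp_dist s)) v.
have q1 : forall i, \sum_v q i v = 1 := fun i => proj2 (@Hp _ _ _ (emp_dist s)).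
apply: (le_trans (ler_sum _ (fun a _ => ler_wpM2l (@pw_ge0 R _ _ q q0 a) (pt a)))).
under eq_bigr do rewrite mulrDr mulrDr.
rewrite !big_split /= -mulr_suml (@pw_sum1 R _ _ q q1) mul1r.
have HT2 : \sum_a @pw R _ _ q a * T2 a <= K%:R * LP * (SS * Num.sqrt (#|U|%:R)).
  apply: (@le_trans _ _ (\sum_a @pw R _ _ q a * (K%:R * LP * l1K (emp a) (nuMF (emp s) pit)))).
    apply: ler_sum => a _; apply: ler_wpM2l; first exact: pw_ge0.
    exact: c_term2.
  under eq_bigr do rewrite mulrCA.
  rewrite -mulr_sumr; apply: ler_wpM2l => //; exact: bound_a.
have HT3 := c_term3 s.
apply: (@le_trans _ _ (SS * Num.sqrt (#|X|%:R) + K%:R * LP * (SS * Num.sqrt (#|U|%:R)) + SS * Num.sqrt (#|X|%:R))).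
  by apply: lerD; [apply: lerD|exact: HT3].
move: U1 X1; set sU := Num.sqrt (#|U|%:R); set sX := Num.sqrt (#|X|%:R); set L := K%:R * LP.
move=> U1 X1.
have h1 : SS * sX <= SS * sX * sU by rewrite ler_peMr // mulr_ge0 // ltW // (lt_le_trans ltr01 X1).
have h2 : L * SS * sU <= L * SS * sX * sU.
  rewrite -!mulrA ler_wpM2l // ler_wpM2l // [sX * sU]mulrC mulrA.
  by rewrite ler_peMr // mulr_ge0 // ltW // (lt_le_trans ltr01 U1).
have E : (2 + L) * SS * (sX * sU) = 2 * (SS * sX * sU) + L * SS * sX * sU by ring.
rewrite E; have -> : L * (SS * sU) = L * SS * sU by ring.
lra.
Qed.

End C.

Lemma avg_bound (A : finType) (w g : A -> R) (B : R) :
  (forall a, 0 <= w a) -> \sum_a w a = 1 -> (forall a, g a <= B) ->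
  \sum_a w a * g a <= B.
Proof.
move=> w0 w1 Hg; apply: (@le_trans _ _ (\sum_a w a * B)).
  by apply: ler_sum => a _; apply: ler_wpM2l.
by rewrite -mulr_suml w1 mul1r.
Qed.

Lemma law_dist (X U : finType) (pi : nat -> polT R K X U) (P : transT R K X U)
  (p0 : sconf N X -> R) :
  (forall k x u (mu : X -> 'I_K -> R) (nu : U -> 'I_K -> R),
      is_distK mu -> is_distK nu -> is_dist (P k x u mu nu)) ->
  (forall t, pol_ok (pi t)) -> is_dist p0 ->
  forall t, (forall s, 0 <= law p0 pi P t s) /\ \sum_s law p0 pi P t s = 1.
Proof.
move=> HPd Hpi [p00 p01]; elim=> [|t [IH0 IH1]] //=.
have act0 : forall (s : sconf N X) (a : aconf N U), 0 <= actker (pi t) s a.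
  move=> s a; rewrite /actker; apply: prodr_ge0 => i _; exact: (proj1 (Hpi t _ _ _ (emp_dist s))).
have act1 : forall (s : sconf N X), \sum_(a : aconf N U) actker (pi t) s a = 1.
  move=> s; exact: (@pw_sum1 R _ _ _ (fun i => proj2 (Hpi t _ _ _ (emp_dist s)))).
have tr0 : forall (s : sconf N X) (a : aconf N U) (s' : sconf N X), 0 <= transker P s a s'.
  move=> s a s'; rewrite /transker; apply: prodr_ge0 => i _; exact: (proj1 (HPd _ _ _ _ _ (emp_dist s) (emp_dist a))).
have tr1 : forall (s : sconf N X) (a : aconf N U), \sum_(s' : sconf N X) transker P s a s' = 1.
  move=> s a; exact: (@pw_sum1 R _ _ _ (fun i => proj2 (HPd _ _ _ _ _ (emp_dist s) (emp_dist a)))).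
split.
  move=> s'; apply: sumr_ge0 => s _; apply: sumr_ge0 => a _.
  by rewrite !mulr_ge0.
rewrite exchange_big /= -IH1; apply: eq_bigr => s _.
rewrite exchange_big /= -[RHS]mulr1 -(act1 s) mulr_sumr; apply: eq_bigr => a _.
by rewrite -mulr_sumr tr1 mulr1.
Qed.

End Model.

Unset Implicit Arguments.
Set Strict Implicit.

Theorem lemma10 (R : realType) (K : nat) (N : 'I_K -> nat) (X U : finType)
  (MR LR LP : R) (r : rewT R K X U) (P : transT R K X U)
  (pi : nat -> polT R K X U) (p0 : sconf N X -> R) :
  (0 < K)%N -> (forall k, (0 < N k)%N) ->
  0 < MR -> 0 < LR -> 0 < LP ->
  (forall k x u (mu : X -> 'I_K -> R) (nu : U -> 'I_K -> R),
      is_distK mu -> is_distK nu -> `|r k x u mu nu| <= MR) ->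
  (forall k x u (mu1 mu2 : X -> 'I_K -> R) (nu1 nu2 : U -> 'I_K -> R),
      is_distK mu1 -> is_distK mu2 -> is_distK nu1 -> is_distK nu2 ->
      `|r k x u mu1 nu1 - r k x u mu2 nu2| <= LR * (l1K mu1 mu2 + l1K nu1 nu2)) ->
  (forall k x u (mu : X -> 'I_K -> R) (nu : U -> 'I_K -> R),
      is_distK mu -> is_distK nu -> is_dist (P k x u mu nu)) ->
  (forall k x u (mu1 mu2 : X -> 'I_K -> R) (nu1 nu2 : U -> 'I_K -> R),
      is_distK mu1 -> is_distK mu2 -> is_distK nu1 -> is_distK nu2 ->
      l1 (P k x u mu1 nu1) (P k x u mu2 nu2) <= LP * (l1K mu1 mu2 + l1K nu1 nu2)) ->
  (forall t k x (mu : X -> 'I_K -> R), is_distK mu -> is_dist (pi t k x mu)) ->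
  is_dist p0 ->
  forall t : nat,
  let Npop := (\sum_k N k)%N in
  let S : R := \sum_k (Num.sqrt (N k)%:R)^-1 in
  (* (a) *)
  \sum_s \sum_a law p0 pi P t s * actker (pi t) s a *
      l1K (emp a) (nuMF (emp s) (pi t))
    <= S * Num.sqrt (#|U|%:R)
  /\
  (* (b) *)
  \sum_s \sum_a law p0 pi P t s * actker (pi t) s a *
      `| (Npop%:R)^-1 * \sum_k \sum_(j < N k)
            r k (s (agt j)) (a (agt j)) (emp s) (emp a)
         - \sum_k ((N k)%:R / Npop%:R) * rMF r (emp s) (pi t) k |
    <= (MR + LR) * S * Num.sqrt (#|U|%:R)
  /\
  (* (c) *)
  \sum_s \sum_a \sum_s' law p0 pi P t s * actker (pi t) s a * transker P s a s' *
      l1K (emp s') (PMF P (emp s) (pi t))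
    <= (2 + K%:R * LP) * S * Num.sqrt ((#|X| * #|U|)%:R).
Proof.
move=> K0 Npos MR0 LR0 LP0 HMR HLR HPd HLP Hpi Hp0 t Npop S.
have Hpt : forall t, pol_ok (pi t) by move=> t' k x mu Hmu; exact: Hpi.
have [L0 L1] := law_dist Npos HPd Hpt Hp0 t.
split; [|split].
- under eq_bigr do (under eq_bigr do rewrite -mulrA; rewrite -mulr_sumr).
  apply: avg_bound => // s; exact: (bound_a Npos (Hpt t) s).
- under eq_bigr do (under eq_bigr do rewrite -mulrA; rewrite -mulr_sumr).
  apply: avg_bound => // s.
  exact: (bound_b Npos (Hpt t) K0 (ltW MR0) (ltW LR0) HMR HLR s).
- under eq_bigr do (under eq_bigr do (under eq_bigr do rewrite -mulrA; rewrite -mulr_sumr -mulrA); rewrite -mulr_sumr).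
  apply: avg_bound => // s.
  exact: (bound_c Npos (Hpt t) (ltW LP0) HPd HLP K0 s).
Qed.
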